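(* There exist constants $C > 0$ and $\epsilon_0 \in (0, 1/2)$ such that for all $\epsilon \in (0, \epsilon_0)$ and all $u \in \mathrm{H}^{1/2}_w(\mathbb{R})$ one has $u \in \mathrm{H}^{1/2-\epsilon}(\mathbb{R})$ and $$\|u\|_{\mathrm{L}^2} + |u|_{\mathrm{H}^{1/2-\epsilon}} \leq C \epsilon^{-1/2}\left(\|u\|_{\mathrm{L}^2} + |u|_{\mathrm{H}^{1/2}_w}\right);$$ that is, the canonical injection $\mathrm{H}^{1/2}_w(\mathbb{R}) \to \mathrm{H}^{1/2-\epsilon}(\mathbb{R})$ has norm of order $\epsilon^{-1/2}$ for small $\epsilon$.
   Context: For $s \in ]0,1[$, the Slobodetski seminorm is $|u|_{\mathrm{H}^{s}}^2 = \iint_{\mathbb{R}^2} \frac{|u(x+y)-u(x)|^2}{|y|^{1+2s}}\,\mathrm{d}x\,\mathrm{d}y$, and $\mathrm{H}^s(\mathbb{R})$ is equipped with the norm $\|u\|_{\mathrm{L}^2} + |u|_{\mathrm{H}^s}$. The space $\mathrm{H}^{1/2}_w(\mathbb{R})$ consists of $u \in \mathrm{L}^2(\mathbb{R})$ for which there is $C \geq 0$ with $\|u - u(\cdot+y)\|_{\mathrm{L}^2} \leq C|y|^{1/2}$ for all $y \in \mathbb{R}$; the best such $C$ is denoted $|u|_{\mathrm{H}^{1/2}_w}$, and the norm is $\|u\|_{\mathrm{L}^2} + |u|_{\mathrm{H}^{1/2}_w}$. *)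

(* Defs.v *)
From HB Require Import structures.
From mathcomp Require Import all_boot all_order all_algebra.
From mathcomp Require Import all_classical all_reals all_analysis.
Set Implicit Arguments. Unset Strict Implicit. Unset Printing Implicit Defensive.
Import Order.TTheory GRing.Theory Num.Theory.
Import numFieldNormedType.Exports.
Local Open Scope classical_set_scope.
Local Open Scope ring_scope.

Section Sobolev.
Context {R : realType}.
Local Notation mu := (@lebesgue_measure R).

Definition L2norm (u : R -> R) : \bar R := Lnorm mu 2%:E (EFin \o u).

Definition Hs_semi (s : R) (u : R -> R) : \bar R :=
  poweR (\int[mu]_x \int[mu]_y
      (((u (x + y) - u x) ^+ 2) / (`|y| `^ (1 + 2 * s)))%:E) (2^-1).

Definition Hw_consts (u : R -> R) : set R :=
  [set C | 0 <= C /\ forall y : R,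
      lee (L2norm (fun x => u x - u (x + y))) (C * `|y| `^ (2^-1))%:E].

Definition Hw_semi (u : R -> R) : R := inf (Hw_consts u).

Definition in_L2 (u : R -> R) : Prop :=
  measurable_fun setT u /\ (L2norm u < +oo)%E.

Definition in_Hw (u : R -> R) : Prop := in_L2 u /\ Hw_consts u !=set0.

Definition in_Hs (s : R) (u : R -> R) : Prop :=
  in_L2 u /\ (Hs_semi s u < +oo)%E.
End Sobolev.

(* Main.v *)
Require Import Defs.
From HB Require Import structures.
From mathcomp Require Import all_boot all_order all_algebra.
From mathcomp Require Import all_classical all_reals all_analysis.
From mathcomp Require Import measurable_realfun ring lra.
Set Implicit Arguments. Unset Strict Implicit. Unset Printing Implicit Defensive.
Import Order.TTheory GRing.Theory Num.Theory.
Import numFieldNormedType.Exports.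
Local Open Scope classical_set_scope.
Local Open Scope ring_scope.

Section S.
Context {R : realType}.
Local Notation mu := (@lebesgue_measure R).

Lemma nd_bound (F : (set R)^nat) (f : R -> \bar R) (B : \bar R) :
  {homo F : n m / (n <= m)%N >-> (n <= m)%O} ->
  (forall i, measurable (F i)) ->
  measurable_fun (\bigcup_i F i) f ->
  (forall x, (\bigcup_i F i) x -> (0 <= f x)%E) ->
  (forall i, (\int[mu]_(x in F i) f x <= B)%E) ->
  (\int[mu]_(x in \bigcup_i F i) f x <= B)%E.
Proof.
move=> ndF mF mf f0 FB.
have h : (\int[mu]_(x in F i) f x)%E @[i --> \oo] --> (\int[mu]_(x in \bigcup_i F i) f x)%E.
  apply: ge0_nondecreasing_set_cvg_integral => //.
    move=> i; apply: measurable_funS mf => //.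
      exact: bigcup_measurable.
    exact: bigcup_sup.
  by move=> i x Fx; apply: f0; exists i.
rewrite -(cvg_lim _ h)//.
apply: lime_le; first by apply/cvg_ex; eexists; exact: h.
by apply: nearW => i; exact: FB.
Qed.
Lemma int_pow (p c d : R) : (0 < c)%R -> (c < d)%R -> (p + 1 != 0)%R ->
  (\int[mu]_(x in `[c, d]) (x `^ p)%:E =
  ((d `^ (p + 1) - c `^ (p + 1)) / (p + 1))%:E)%E.
Proof.
move=> c0 cd p1.
pose F := fun x : R => (p + 1)^-1 * x `^ (p + 1).
have dF (x : R) : (0 < x)%R -> is_derive x 1 F (x `^ p).
  move=> x0.
  have h := is_derive1_powR (p + 1) x0.
  have -> : x `^ p = (p + 1)^-1 *: ((p + 1) * x `^ (p + 1 - 1)).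
    by rewrite addrK [RHS]mulrA mulVf// mul1r.
  exact: is_deriveZ.
have cpow (x : R) : (0 < x)%R -> {for x, continuous (fun x : R => x `^ p)}.
  move=> x0; apply: differentiable_continuous; apply/derivable1_diffP.
  by apply: derivable_powR; rewrite in_itv/= andbT.
have cF (x : R) : (0 < x)%R -> {for x, continuous F}.
  move=> x0; apply: differentiable_continuous; apply/derivable1_diffP.
  by have [] := dF x x0.
rewrite (@continuous_FTC2 _ _ F)//.
- by rewrite -EFinB; congr EFin; rewrite /F -mulrBr mulrC.
- apply: continuous_in_subspaceT => x; rewrite inE/= in_itv/= => /andP[cx _].
  exact: cpow (lt_le_trans c0 cx).
- split.
  + move=> x; rewrite in_itv/= => /andP[cx _].
    by have [] := dF x (lt_trans c0 cx).
  + apply: cvg_at_right_filter; exact: cF.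
  + apply: cvg_at_left_filter; exact: cF (lt_trans c0 cd).
- move=> x; rewrite in_itv/= => /andP[cx _].
  by rewrite derive1E; have [_ ->] := dF x (lt_trans c0 cx).
Qed.

Lemma mpow (a : R) (D : set R) : measurable_fun D (fun x : R => (x `^ a)%:E).
Proof. by apply/measurable_EFinP; apply: measurable_funTS; exact: measurable_powR. Qed.

Lemma int_near0 (a : R) : 0 < a + 1 ->
  (\int[mu]_x ((if (0 < x) && (x <= 1) then x `^ a else 0)%:E) <= ((a + 1)^-1)%:E)%E.
Proof.
move=> a1.
have -> : (\int[mu]_x ((if (0 < x) && (x <= 1) then x `^ a else 0)%:E) =
    \int[mu]_(x in `]0%R, 1%R]) (x `^ a)%:E)%E.
  rewrite [RHS]integral_mkcond; apply: eq_integral => x _.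
  by rewrite /patch mem_setE in_itv/=; case: ifP.
have -> : `]0, 1]%classic = \bigcup_n `[(n.+2%:R)^-1, 1]%classic :> set R.
  apply/seteqP; split => x /=.
    rewrite in_itv/= => /andP[x0 x1].
    exists (Num.Def.trunc (x^-1)) => //=.
    rewrite in_itv/= x1 andbT -[x in (_ <= x)]invrK lef_pV2 ?posrE ?invr_gt0//.
    apply: ltW; apply: lt_le_trans (truncnS_gt _) _.
    by rewrite ler_nat.
  move=> [n _] /=; rewrite !in_itv/= => /andP[cx ->]; rewrite andbT.
  by apply: lt_le_trans cx; rewrite invr_gt0.
apply: nd_bound.
- move=> n m nm; rewrite subsetEset => x/=; rewrite !in_itv/= => /andP[cx ->].
  rewrite andbT; apply: le_trans cx; rewrite lef_pV2 ?posrE// ler_nat.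
  by rewrite ltnS.
- by move=> i; exact: measurable_itv.
- exact: mpow.
- by move=> x _; rewrite lee_fin powR_ge0.
- move=> n; rewrite int_pow//; last first.
  + by rewrite gt_eqF.
  + by rewrite invf_lt1// ltr1n.
  rewrite lee_fin powR1 -[leRHS]mul1r; apply: ler_wpM2r.
    by rewrite invr_ge0 ltW.
  by rewrite gerBl powR_ge0.
Qed.

Lemma int_tail (b : R) : b + 1 < 0 ->
  (\int[mu]_x ((if 1 <= x then x `^ b else 0)%:E) <= ((- (b + 1))^-1)%:E)%E.
Proof.
move=> b1.
have -> : (\int[mu]_x ((if 1 <= x then x `^ b else 0)%:E) =
    \int[mu]_(x in `[1%R, +oo[) (x `^ b)%:E)%E.
  rewrite [RHS]integral_mkcond; apply: eq_integral => x _.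
  by rewrite /patch mem_setE in_itv/= andbT; case: ifP.
have -> : `[1, +oo[%classic = \bigcup_n `[1, n.+2%:R]%classic :> set R.
  apply/seteqP; split => x /=.
    rewrite in_itv/= andbT => x1.
    exists (Num.Def.trunc x) => //=.
    rewrite in_itv/= x1/=.
    apply: ltW; apply: lt_le_trans (truncnS_gt _) _.
    by rewrite ler_nat.
  by move=> [n _] /=; rewrite !in_itv/= => /andP[-> _].
apply: nd_bound.
- move=> n m nm; rewrite subsetEset => x/=; rewrite !in_itv/= => /andP[-> cx].
  by apply: le_trans cx _; rewrite ler_nat ltnS.
- by move=> i; exact: measurable_itv.
- exact: mpow.
- by move=> x _; rewrite lee_fin powR_ge0.
- move=> n; rewrite int_pow//; last first.
  + by rewrite lt_eqF.
  + by rewrite ltr1n.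
  rewrite lee_fin powR1 -mulrNN opprB -invrN.
  rewrite -[leRHS]mul1r; apply: ler_wpM2r.
    by rewrite invr_ge0 oppr_ge0 ltW.
  by rewrite gerBl powR_ge0.
Qed.
Lemma mshift (y : R) : measurable_fun [set: R] (fun x : R => x + y)%R.
Proof. by apply: measurable_funD => //; exact: measurable_cst. Qed.

Lemma lebesgue_measure_shift (y : R) (A : set R) : measurable A ->
  (pushforward mu (fun x : R => (x + y)%R : measurableTypeR R) A = mu A)%E.
Proof.
move=> mA.
have mf := mshift y.
apply/esym/(@lebesgue_measure_unique _ (pushforward mu (fun x : R => (x + y)%R : measurableTypeR R))) => //=.
move=> _ [[a b]] _ <-.
rewrite /pushforward.
rewrite (_ : _ @^-1` _ = [set` `]a - y, b - y]%R]); last first.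
  by apply/seteqP; split => x /=; rewrite !in_itv/= ltrBlDr lerBrDr.
rewrite !lebesgue_measure_itv/= !lte_fin ltrD2r.
case: ifP => // _; rewrite -!EFinD; congr EFin.
by rewrite opprB addrA subrK.
Qed.

Lemma ge0_integral_shift (y : R) (f : R -> \bar R) :
  measurable_fun [set: R] f -> (forall x, (0 <= f x)%E) ->
  (\int[mu]_x f (x + y)%R = \int[mu]_x f x)%E.
Proof.
move=> mf f0.
have mfy := mshift y.
have e : (\int[mu]_x f x = \int[pushforward mu (fun x : R => (x + y)%R : measurableTypeR R)]_x f x)%E.
  apply: eq_measure_integral => A mA _.
  exact: (esym (lebesgue_measure_shift y mA)).
by rewrite e ge0_integral_pushforward//=.
Qed.
Lemma ge0_integral_opp (f : R -> \bar R) :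
  measurable_fun [set: R] f -> (forall x, (0 <= f x)%E) ->
  (\int[mu]_x f (- x)%R = \int[mu]_x f x)%E.
Proof.
move=> mf f0.
have mfy : measurable_fun [set: R] (-%R : R -> R) by [].
have e : (\int[mu]_x f x = \int[pushforward mu (-%R : _ -> measurableTypeR R)]_x f x)%E.
  apply: eq_measure_integral => A mA _.
  exact: (esym (lebesgue_measureN mA)).
by rewrite e ge0_integral_pushforward//=.
Qed.
End S.

Section S2.
Context {R : realType}.
Local Notation mu := (@lebesgue_measure R).

Lemma L2E (f : R -> R) :
  L2norm f = poweR (\int[mu]_x ((f x) ^+ 2)%:E)%E (2^-1).
Proof.
rewrite /L2norm unlock /Lnorm; congr poweR.
apply: eq_integral => x _ /=.
by rewrite powR_mulrn// real_normK// num_real.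
Qed.

Lemma poweR_sq_le (Q : \bar R) (c : R) : 0 <= c ->
  (poweR Q (2^-1) <= c%:E)%E -> (Q <= (c ^+ 2)%:E)%E.
Proof.
move=> c0; case: Q => [q| |] /=.
- rewrite !lee_fin; have [q0|q0] := leP 0 q.
    rewrite powR12_sqrt// => h.
    by rewrite -[q](sqr_sqrtr q0); rewrite lerXn2r// ?nnegrE ?sqrtr_ge0.
  by move=> _; apply: le_trans (ltW q0) _; rewrite sqr_ge0.
- by rewrite invr_eq0 pnatr_eq0 /= leye_eq.
- by move=> _; exact: leNye.
Qed.

Lemma poweR_le_sq (Q : \bar R) (c : R) : 0 <= c -> (0 <= Q)%E ->
  (Q <= (c ^+ 2)%:E)%E -> (poweR Q (2^-1) <= c%:E)%E.
Proof.
move=> c0; case: Q => [q| |] //=.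
rewrite !lee_fin => q0.
rewrite powR12_sqrt// => h.
by rewrite -[leRHS](ger0_norm c0) -sqrtr_sqr ler_sqrt// sqr_ge0.
Qed.
End S2.

Section M.
Context {R : realType}.
Local Notation mu := (@lebesgue_measure R).

Lemma Dy_bound1 (u : R -> R) (W y : R) : 0 <= W ->
  (L2norm (fun x => (u x - u (x + y))%R) <= (W * `|y| `^ 2^-1)%:E)%E ->
  (\int[mu]_x ((u (x + y) - u x) ^+ 2)%:E <= (W ^+ 2 * `|y|)%:E)%E.
Proof.
move=> W0; rewrite L2E => /poweR_sq_le h.
have := h (mulr_ge0 W0 (powR_ge0 _ _)).
rewrite exprMn powR12_sqrt// sqr_sqrtr//.
by under eq_integral do rewrite -sqrrN opprB.
Qed.

Lemma Dy_bound2 (u : R -> R) (I y : R) : measurable_fun setT u ->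
  (\int[mu]_x ((u x) ^+ 2)%:E = I%:E)%E ->
  (\int[mu]_x ((u (x + y) - u x) ^+ 2)%:E <= (4 * I)%:E)%E.
Proof.
move=> mu_ hI.
have mu2 : measurable_fun setT (fun x : R => ((u x) ^+ 2)%:E).
  by apply/measurable_EFinP; exact: measurable_funX.
have mu2y : measurable_fun setT (fun x : R => ((u (x + y)) ^+ 2)%:E).
  apply/measurable_EFinP; apply: measurable_funX.
  by apply: measurableT_comp => //; exact: mshift.
apply: (@le_trans _ _ (\int[mu]_x (2%:E * ((u (x + y)) ^+ 2)%:E + 2%:E * ((u x) ^+ 2)%:E))%E).
  apply: ge0_le_integral => //.
  - by move=> x _; rewrite lee_fin sqr_ge0.
  - apply/measurable_EFinP; apply: measurable_funX; apply: measurable_funB => //.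
    by apply: measurableT_comp => //; exact: mshift.
  - apply: emeasurable_funD; apply: emeasurable_funM => //.
  - move=> x _; rewrite -!EFinM -EFinD lee_fin.
    have := sqr_ge0 (u (x + y) + u x); rewrite sqrrD sqrrB; lra.
rewrite ge0_integralD//; last 4 first.
- by move=> x _; rewrite mule_ge0// lee_fin sqr_ge0.
- exact: emeasurable_funM.
- by move=> x _; rewrite mule_ge0// lee_fin sqr_ge0.
- exact: emeasurable_funM.
rewrite !ge0_integralZl_EFin//; last 2 first.
- by move=> x _; rewrite lee_fin sqr_ge0.
- by move=> x _; rewrite lee_fin sqr_ge0.
rewrite (ge0_integral_shift y (f := fun x => ((u x) ^+ 2)%:E))//; last first.
  by move=> x; rewrite lee_fin sqr_ge0.
by rewrite hI -EFinM -EFinD lee_fin; lra.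
Qed.

Definition psi1 (a : R) (y : R) := if (0 < y) && (y <= 1) then y `^ a else 0.
Definition psi2 (b : R) (y : R) := if 1 <= y then y `^ b else 0.

Lemma mpsi1 a : measurable_fun setT (psi1 a).
Proof.
apply: (@measurable_fun_ifT _ _ _ _ (fun y : R => y `^ a) (fun=> 0) (fun y : R => (0 < y) && (y <= 1))); last 2 first.
- exact: measurable_powR.
- exact: measurable_cst.
apply: measurable_and.
  by apply: measurable_fun_ltr => //; exact: measurable_cst.
by apply: measurable_fun_ler => //; exact: measurable_cst.
Qed.

Lemma mpsi2 b : measurable_fun setT (psi2 b).
Proof.
apply: (@measurable_fun_ifT _ _ _ _ (fun y : R => y `^ b) (fun=> 0) (fun y : R => 1 <= y)); last 2 first.
- exact: measurable_powR.
- exact: measurable_cst.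
by apply: measurable_fun_ler => //; exact: measurable_cst.
Qed.

Lemma psi1_ge0 a y : 0 <= psi1 a y.
Proof. by rewrite /psi1; case: ifP => // _; exact: powR_ge0. Qed.

Lemma psi2_ge0 b y : 0 <= psi2 b y.
Proof. by rewrite /psi2; case: ifP => // _; exact: powR_ge0. Qed.


Lemma main_bound (eps W I : R) (u : R -> R) :
  0 < eps -> eps < 4^-1 -> measurable_fun setT u ->
  (\int[mu]_x ((u x) ^+ 2)%:E = I%:E)%E -> 0 <= I -> 0 <= W ->
  (forall y, (L2norm (fun x => (u x - u (x + y))%R) <= (W * `|y| `^ 2^-1)%:E)%E) ->
  (\int[mu]_x \int[mu]_y (((u (x + y) - u x) ^+ 2) / (`|y| `^ (1 + 2 * (2^-1 - eps))))%:E
     <= (W ^+ 2 / eps + 16 * I)%:E)%E.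
Proof.
move=> e0 e4 mu_ hI I0 W0 HW.
set r := 1 + 2 * (2^-1 - eps).
have rE : r = 2 - 2 * eps.
  by rewrite /r mulrBr mulfV// addrA.
pose g := fun p : R * R => ((u (p.1 + p.2) - u p.1) ^+ 2 * `|p.2| `^ (- r))%:E.
have -> : (\int[mu]_x \int[mu]_y (((u (x + y) - u x) ^+ 2) / (`|y| `^ r))%:E =
    \int[mu]_x \int[mu]_y g (x, y))%E.
  by apply: eq_integral => x _; apply: eq_integral => y _; rewrite /g /= powRN.
have mg : measurable_fun setT g.
  apply/measurable_EFinP; apply: measurable_funM.
    apply: measurable_funX; apply: measurable_funB.
      exact: (measurableT_comp mu_ (measurable_funD measurable_fst measurable_snd)).
    exact: (measurableT_comp mu_ measurable_fst).
  have mp : measurable_fun setT (fun y : R => `|y| `^ (- r)).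
    exact: (measurableT_comp (measurable_powR (- r)) (@normr_measurable _ setT)).
  exact: (measurableT_comp mp measurable_snd).
have g0 p : (0 <= g p)%E.
  by rewrite lee_fin mulr_ge0// ?sqr_ge0// powR_ge0.
rewrite (@fubini_tonelli _ _ _ _ _ mu mu g mg g0) /=.
pose phi := fun y : R => W ^+ 2 * psi1 (1 - r) y + 4 * I * psi2 (- r) y.
have mphi : measurable_fun setT phi.
  by apply: measurable_funD; apply: measurable_funM => //;
    first [exact: mpsi1|exact: mpsi2|exact: measurable_cst].
have phi0 y : 0 <= phi y.
  by rewrite addr_ge0// mulr_ge0// ?sqr_ge0 ?psi1_ge0 ?psi2_ge0// mulr_ge0.
have key y : (\int[mu]_x g (x, y) <= (phi y + phi (- y))%:E)%E.
  have mD : measurable_fun setT (fun x : R => ((u (x + y) - u x) ^+ 2)%:E).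
    apply/measurable_EFinP; apply: measurable_funX; apply: measurable_funB => //.
    by apply: measurableT_comp => //; exact: mshift.
  have -> : (\int[mu]_x g (x, y) = (\int[mu]_x ((u (x + y) - u x) ^+ 2)%:E) * (`|y| `^ (- r))%:E)%E.
    rewrite /g /=; under eq_integral do rewrite EFinM.
    rewrite ge0_integralZr//.
    all: try (by move=> x _; rewrite lee_fin sqr_ge0).
    all: try (by rewrite lee_fin powR_ge0).
  have habs : phi `|y| <= phi y + phi (- y).
    case: (leP 0 y) => y0.
      by rewrite ger0_norm// lerDl phi0.
    by rewrite ltr0_norm// lerDr phi0.
  apply: le_trans (_ : _ <= (phi `|y|)%:E)%E _; last by rewrite lee_fin.
  have r0 : 0 < r by rewrite rE; lra.
  have [->|y0] := eqVneq y 0.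
    by rewrite normr0 powR0 ?oppr_eq0 ?gt_eqF// mule0 lee_fin phi0.
  have ay0 : 0 < `|y| by rewrite normr_gt0.
  have k0 : (0 <= (`|y| `^ (- r))%:E)%E by rewrite lee_fin powR_ge0.
  case: (leP `|y| 1) => y1.
    apply: le_trans (lee_wpmul2r k0 (Dy_bound1 W0 (HW y))) _.
    rewrite -EFinM lee_fin /phi /psi1 ifT; last by rewrite ay0 y1.
    rewrite (@powRD _ _ 1 (- r)); last by apply/implyP => _; rewrite normr_eq0.
    rewrite powRr1 ?normr_ge0// mulrA -[X in X <= _]addr0 lerD2l.
    by rewrite mulr_ge0 ?psi2_ge0// mulr_ge0.
  apply: le_trans (lee_wpmul2r k0 (Dy_bound2 y mu_ hI)) _.
  rewrite -EFinM lee_fin /phi /psi2 ifT; last exact: ltW.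
  by rewrite -[X in X <= _]add0r lerD2r mulr_ge0 ?sqr_ge0 ?psi1_ge0.
have hphi : (\int[mu]_y (phi y)%:E <= (W ^+ 2 * (2 * eps)^-1 + 4 * I * 2)%:E)%E.
  have J1 : (\int[mu]_y (psi1 (1 - r) y)%:E <= ((2 * eps)^-1)%:E)%E.
    have -> : 2 * eps = 1 - r + 1 by rewrite rE; lra.
    by apply: int_near0; rewrite rE; lra.
  have J2 : (\int[mu]_y (psi2 (- r) y)%:E <= 2%:E)%E.
    apply: le_trans (int_tail (b := - r) _) _; first by rewrite rE; lra.
    rewrite lee_fin -[leRHS]invrK lef_pV2 ?posrE ?invr_gt0//; rewrite rE; lra.
  have m1 : measurable_fun setT (fun y => (psi1 (1 - r) y)%:E).
    by apply/measurable_EFinP; exact: mpsi1.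
  have m2 : measurable_fun setT (fun y => (psi2 (- r) y)%:E).
    by apply/measurable_EFinP; exact: mpsi2.
  under eq_integral do rewrite /phi EFinD !EFinM.
  rewrite ge0_integralD//; last 4 first.
  - by move=> y _; rewrite -EFinM lee_fin mulr_ge0 ?sqr_ge0 ?psi1_ge0.
  - exact: emeasurable_funM.
  - by move=> y _; rewrite -EFinM lee_fin mulr_ge0 ?psi2_ge0// mulr_ge0.
  - exact: emeasurable_funM.
  rewrite !ge0_integralZl_EFin//; last 4 first.
  - by move=> y _; rewrite lee_fin psi2_ge0.
  - by rewrite mulr_ge0.
  - by move=> y _; rewrite lee_fin psi1_ge0.
  - by rewrite sqr_ge0.
  rewrite EFinD !EFinM; apply: leeD; apply: lee_wpmul2l => //.
  - by rewrite lee_fin sqr_ge0.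
  - by rewrite lee_fin mulr_ge0.
apply: (@le_trans _ _ (\int[mu]_y (phi y + phi (- y))%:E)%E).
  apply: ge0_le_integral => //.
  - by move=> y _; apply: integral_ge0 => x _; exact: g0.
  - exact: (@measurable_fun_fubini_tonelli_G _ _ _ _ _ mu g mg g0).
  - apply/measurable_EFinP; apply: measurable_funD => //.
    exact: (measurableT_comp mphi (@oppr_measurable _ setT)).
under eq_integral do rewrite EFinD.
rewrite ge0_integralD //; last 4 first.
- by move=> y _; rewrite lee_fin phi0.
- exact/measurable_EFinP.
- by move=> y _; rewrite lee_fin phi0.
- apply/measurable_EFinP.
  exact: (measurableT_comp mphi (@oppr_measurable _ setT)).
rewrite (ge0_integral_opp (f := fun y => (phi y)%:E)); last 2 first.
- exact/measurable_EFinP.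
- by move=> y; rewrite lee_fin phi0.
apply: le_trans (leeD hphi hphi) _.
rewrite -EFinD lee_fin.
have h : W ^+ 2 * (2 * eps)^-1 + W ^+ 2 * (2 * eps)^-1 = W ^+ 2 / eps.
  by field; rewrite gt_eqF.
lra.
Qed.
End M.

Theorem proposition4 (R : realType) :
  exists (C eps0 : R), 0 < C /\ 0 < eps0 < 2^-1 /\
  forall (eps : R), 0 < eps < eps0 ->
  forall (u : R -> R), in_Hw u ->
    in_Hs (2^-1 - eps) u /\
    (L2norm u + Hs_semi (2^-1 - eps) u
       <= (C * eps `^ (- 2^-1))%:E * (L2norm u + (Hw_semi u)%:E))%E.
Proof.
exists 5, 4^-1; split; first by [].
split; first by apply/andP; split; [rewrite invr_gt0|]; lra.
move=> eps /andP[e0 e4] u [[mu_ L2lt] [W1 [W1ge HW1]]].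
set J := (\int[lebesgue_measure]_x ((u x) ^+ 2)%:E)%E.
have J0 : (0 <= J)%E by apply: integral_ge0 => x _; rewrite lee_fin sqr_ge0.
have L2J : L2norm u = poweR J (2^-1) by rewrite L2E.
have Jfin : J \is a fin_num.
  rewrite ge0_fin_numE//; apply: (@lty_poweRy _ _ (2^-1)); first by rewrite invr_eq0.
  by rewrite -L2J.
set I := fine J.
have hI : J = I%:E by rewrite /I fineK.
have I0 : 0 <= I by rewrite -lee_fin -hI.
set N := Num.sqrt I.
have L2N : L2norm u = N%:E by rewrite L2J hI poweR_EFin powR12_sqrt.
set e := eps `^ (- 2^-1).
have e2 : e ^+ 2 = eps^-1.
  rewrite /e powRN exprVn powR12_sqrt ?ltW// sqr_sqrtr// ltW//.
have epos : 0 < e by rewrite /e powR_gt0.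
have e1 : 1 <= e.
  have : 1 <= e ^+ 2 by rewrite e2 invf_ge1//; lra.
  nra.
have NN : N ^+ 2 = I by rewrite /N sqr_sqrtr.
have N0 : 0 <= N by rewrite /N sqrtr_ge0.
set S := (\int[lebesgue_measure]_x \int[lebesgue_measure]_y
   (((u (x + y) - u x) ^+ 2) / (`|y| `^ (1 + 2 * (2^-1 - eps))))%:E)%E.
have S0 : (0 <= S)%E.
  by apply: integral_ge0 => x _; apply: integral_ge0 => y _; rewrite lee_fin mulr_ge0// ?sqr_ge0// invr_ge0 powR_ge0.
have HsS : Hs_semi (2^-1 - eps) u = poweR S (2^-1) by [].
have bound W : Hw_consts u W -> (Hs_semi (2^-1 - eps) u <= (W * e + 4 * N)%:E)%E.
  move=> [W0 HW].
  rewrite HsS; apply: poweR_le_sq => //.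
    by rewrite addr_ge0// mulr_ge0// ltW.
  apply: le_trans (main_bound e0 _ mu_ hI I0 W0 HW) _; first lra.
  rewrite lee_fin.
  have : 0 <= W * e * N by rewrite !mulr_ge0// ltW.
  have -> : W ^+ 2 / eps = W ^+ 2 * e ^+ 2 by rewrite e2.
  rewrite -NN; nra.
have Hsfin : Hs_semi (2^-1 - eps) u \is a fin_num.
  rewrite ge0_fin_numE ?HsS ?poweR_ge0//.
  by apply: le_lt_trans (bound W1 (conj W1ge HW1)) _; rewrite ?HsS// ltry.
set h := fine (Hs_semi (2^-1 - eps) u).
have hE : Hs_semi (2^-1 - eps) u = h%:E by rewrite /h fineK.
split.
  by split => //; rewrite hE ltry.
rewrite L2N hE -EFinD -EFinM lee_fin.
have ne : Hw_consts u !=set0 by exists W1.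
have Wi0 : 0 <= Hw_semi u.
  by apply: lb_le_inf => // W [].
have hW : (h - 4 * N) / e <= Hw_semi u.
  apply: lb_le_inf => // W HWc.
  have := bound W HWc; rewrite hE lee_fin => hb.
  by rewrite ler_pdivrMr//; lra.
move: hW; rewrite ler_pdivrMr// => hW.
nra.
Qed.
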